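(* Let $G=G_{1}\times\cdots\times G_{d}$ be a direct product where each $G_j$ is $k_j$-regular with $k_j\geq 1$. If, for each $j$, the adjacency eigenvalues of $G_j$ are integers all having the same 2-adic valuation $\nu_2$, then for every vertex $u$ of $G$, $\uparrow^{2}G$ has Laplacian perfect state transfer between $(0,u)$ and $(1,u)$.
   Context: All graphs are simple, undirected and unweighted. The direct product $G\times H$ is the graph with adjacency matrix $A(G)\otimes A(H)$. For a nonzero integer $n$, $\nu_2(n)$ is the exponent of the largest power of $2$ dividing $n$, and $\nu_2(0)=\infty$. The blow-up $\uparrow^{2}G$ has vertex set $\mathbb{Z}_2\times V(G)$, with $(l,u)\sim(m,v)$ iff $u\sim v$ in $G$. For a graph $X$ with Laplacian $L=D-A$, $U(t)=\exp(itL)$, and $X$ has Laplacian perfect state transfer between vertices $a,b$ if $U(\tau)\mathbf{e}_a=\gamma\mathbf{e}_b$ for some $\tau>0$ and $\gamma\in\mathbb{C}$. *)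

(* Defs.v *)
From HB Require Import structures.
From mathcomp Require Import all_boot all_order all_algebra.
From mathcomp Require Import complex.
From mathcomp Require Import all_classical all_reals all_analysis.

Set Implicit Arguments.
Unset Strict Implicit.
Unset Printing Implicit Defensive.

Import Order.TTheory GRing.Theory Num.Theory.
Import numFieldTopology.Exports numFieldNormedType.Exports.
Local Open Scope ring_scope.
Local Open Scope complex_scope.
Local Open Scope classical_set_scope.
Local Open Scope ring_scope.

Definition simple_graph (T : finType) (e : rel T) : Prop :=
  symmetric e /\ irreflexive e.

Definition regular (T : finType) (e : rel T) (k : nat) : Prop :=
  forall v : T, #|[set w | e v w]| = k.

Definition adjmx (F : nzRingType) (T : finType) (e : rel T) : 'M[F]_#|T| :=
  \matrix_(i, j) (e (enum_val i) (enum_val j))%:R.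

Definition degmx (F : nzRingType) (T : finType) (e : rel T) : 'M[F]_#|T| :=
  \matrix_(i, j) ((i == j)%:R * (#|[set w | e (enum_val i) w]|)%:R).

Definition lapmx (F : nzRingType) (T : finType) (e : rel T) : 'M[F]_#|T| :=
  degmx F e - adjmx F e.

Definition expm_partial (F : fieldType) (n : nat) (M : 'M[F]_n) (N : nat) : 'M[F]_n :=
  \sum_(k < N) ((k`!)%:R)^-1 *: iter k (mulmx M) 1%:M.

Definition basis_vec (F : nzRingType) (T : finType) (a : T) : 'cV[F]_#|T| :=
  \col_i (enum_val i == a)%:R.

(* Laplacian perfect state transfer between a and b:
   exists tau > 0 and gamma with exp(i tau L) e_a = gamma e_b, where the
   matrix exponential is the limit of its partial sums (entrywise). *)
Definition lap_PST (R : realType) (T : finType) (e : rel T) (a b : T) : Prop :=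
  exists tau : R, 0 < tau /\
  exists gamma : R[i],
    forall x : 'I_#|T|,
      (fun N : nat =>
         ((expm_partial (((0 +i* tau)%C : R[i]) *: lapmx R[i] e) N
            *m basis_vec R[i] a) x ord0 : (R[i] : numClosedFieldType))) @ \oo
      --> (gamma * basis_vec R[i] b x ord0 : (R[i] : numClosedFieldType)).

Definition dprod_rel (d : nat) (V : 'I_d -> finType) (E : forall j, rel (V j))
  : rel {dffun forall j : 'I_d, V j} :=
  fun f g => [forall j, E j (f j) (g j)].

Definition blowup2 (T : finType) (e : rel T) : rel ('I_2 * T) :=
  fun x y => e x.2 y.2.

(* 2-adic valuation with nu2 0 = infinity (None). *)
Definition nu2 (z : int) : option nat :=
  if z == 0 then None else Some (logn 2 `|z|%N).

(* Main.v *)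
Require Import Defs.
From HB Require Import structures.
From mathcomp Require Import all_boot all_order all_algebra.
From mathcomp Require Import complex.
From mathcomp Require Import all_classical all_reals all_analysis.
From mathcomp Require Import ring lra zify.
Import Order.TTheory GRing.Theory Num.Theory.
Import numFieldTopology.Exports numFieldNormedType.Exports.
Local Open Scope ring_scope.
Local Open Scope complex_scope.
Local Open Scope classical_set_scope.
Local Open Scope ring_scope.
Local Open Scope sesquilinear_scope.


Section S.
Variable R : realType.
Local Notation C := (R[i] : numClosedFieldType).
Lemma expi_odd k : ('i : C)^+k = 'i^+(odd k) * (-1)^+(k./2).
Proof.
by rewrite -[in LHS](odd_double_half k) exprD -muln2 mulnC exprM sqr_i.
Qed.
Lemma exp_term (t : R) k :
  (k`!%:R : C)^-1 * ('i * t%:C)^+k = (cos_coeff t k)%:C + 'i * (sin_coeff t k)%:C.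
rewrite /cos_coeff /sin_coeff /= -exprnP.
rewrite exprMn expi_odd.
rewrite !rmorphM !rmorphXn (rmorphN1 (real_complex R)) fmorphV !rmorph_nat.
case: (boolP (odd k)) => ok /=.
- have -> : k.-1./2 = k./2.
    by rewrite -[in LHS](odd_double_half k) ok add1n /= doubleK.
  ring.
- ring.
Qed.
Lemma cvg_realC (u : nat -> R) (a : R) :
  u n @[n --> \oo] --> a -> (fun n => (u n)%:C : C) @ \oo --> (a%:C : C).
Proof.
move=> /cvgrPdist_lt H; apply/cvgrPdist_lt => e e0.
have := e0; rewrite ltcE /= => /andP[/eqP He1 He2].
have := H _ He2; apply: filterS => n Hn.
rewrite -rmorphB {1}/Num.norm /= expr0n /= addr0 sqrtr_sqr.
have -> : e = (complex.Re e)%:C by case: e e0 He1 He2 {Hn} => ? ? ? /= ->.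
by rewrite ltcR.
Qed.
Lemma exp_cvg (t : R) :
  (fun N => \sum_(k < N) (k`!%:R : C)^-1 * ('i * t%:C)^+k) @ \oo -->
  ((cos t)%:C + 'i * (sin t)%:C : C).
Proof.
have E : (fun N => \sum_(k < N) (k`!%:R : C)^-1 * ('i * t%:C)^+k) =
  (fun N => (series (cos_coeff t) N)%:C + 'i * (series (sin_coeff t) N)%:C).
  apply/funext => N; rewrite /series /= !big_mkord.
  under eq_bigr do rewrite exp_term.
  by rewrite big_split /= -mulr_sumr !rmorph_sum.
rewrite E; apply: cvgD; last apply: cvgMl_tmp; apply: cvg_realC.
- rewrite cos.unlock; exact: is_cvg_series_cos_coeff.
- rewrite sin.unlock; exact: is_cvg_series_sin_coeff.
Qed.
Lemma cvg_sum_seq (J : Type) (s : seq J) (f : J -> nat -> C) (l : J -> C) :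
  (forall j, f j @ \oo --> l j) ->
  (fun N => \sum_(j <- s) f j N) @ \oo --> \sum_(j <- s) l j.
Proof.
move=> H; elim: s => [|j s IH].
  have -> : (fun N => \sum_(j <- [::]) f j N) = (fun=> (0 : C)).
    by apply/funext => N; rewrite big_nil.
  rewrite big_nil.
  exact: cvg_cst.
have -> : (fun N => \sum_(i <- j :: s) f i N) =
   (f j + (fun N => \sum_(i <- s) f i N)).
  by apply/funext => N; rewrite big_cons.
rewrite big_cons.
exact: (cvgD (H j) IH).
Qed.
Lemma iter_eig n (M : 'M[C]_n) (w : 'cV[C]_n) (mu s : C) k :
  M *m w = mu *: w -> iter k (mulmx (s *: M)) 1%:M *m w = (s * mu)^+k *: w.
Proof.
move=> H; elim: k => [|k IH]; first by rewrite /= mul1mx expr0 scale1r.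
rewrite iterS -mulmxA IH -scalemxAl -scalemxAr H !scalerA exprSr.
by rewrite [s * _]mulrC -mulrA.
Qed.
Lemma expm_eigvec n (M : 'M[C]_n) (w : 'cV[C]_n) (mu s : C) N :
  M *m w = mu *: w ->
  expm_partial (s *: M) N *m w = (\sum_(k < N) (k`!%:R)^-1 * (s * mu)^+k) *: w.
Proof.
move=> H; rewrite /expm_partial mulmx_suml scaler_suml; apply: eq_bigr => k _.
by rewrite -scalemxAl (@iter_eig _ _ _ _ s k H) scalerA.
Qed.
Lemma imul_real (tau a : R) : ((0 +i* tau)%C : C) * a%:C = 'i * (tau * a)%:C.
Proof. apply/eqP; rewrite eq_complex /=. (apply/andP; split; apply/eqP; ring). Qed.
Lemma exp_single n (M : 'M[C]_n) (w w' : 'cV[C]_n) (tau : R) (c : C) :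
  (exists a : R, M *m w = a%:C *: w /\
     ((cos (tau * a))%:C + 'i * (sin (tau * a))%:C) *: w = c *: w') ->
  forall x, (fun N => ((expm_partial (((0 +i* tau)%C : C) *: M) N
              *m w) x ord0 : C)) @ \oo --> (c * w' x ord0 : C).
Proof.
move=> [a [Ha Hb]] x.
have E2 : (fun N => (expm_partial (((0 +i* tau)%C : C) *: M) N *m w) x ord0) =
   (fun N => (\sum_(k < N) (k`!%:R : C)^-1 * ('i * (tau * a)%:C)^+k) * w x ord0).
  by apply/funext => N; rewrite (@expm_eigvec _ _ _ _ _ N Ha) mxE imul_real.
have -> : c * w' x ord0 = (c *: w') x ord0 by rewrite mxE.
rewrite E2 -Hb mxE.
apply: cvgMr_tmp. exact: exp_cvg.
Qed.
Lemma exp_family (I : finType) n (M : 'M[C]_n) (w0 w0' : 'cV[C]_n) (w w' : I -> 'cV[C]_n)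
    (tau : R) (c : C) :
  (exists a : R, M *m w0 = a%:C *: w0 /\
     ((cos (tau * a))%:C + 'i * (sin (tau * a))%:C) *: w0 = c *: w0') ->
  (forall r, exists a : R, M *m w r = a%:C *: w r /\
     ((cos (tau * a))%:C + 'i * (sin (tau * a))%:C) *: w r = c *: w' r) ->
  forall x, (fun N => ((expm_partial (((0 +i* tau)%C : C) *: M) N
              *m (w0 + \sum_r w r)) x ord0 : C)) @ \oo -->
     (c * (w0' + \sum_r w' r) x ord0 : C).
Proof.
move=> H0 H x.
have E : (fun N => ((expm_partial (((0 +i* tau)%C : C) *: M) N
              *m (w0 + \sum_r w r)) x ord0 : C)) =
   ((fun N => ((expm_partial (((0 +i* tau)%C : C) *: M) N *m w0) x ord0)) +
     (fun N => \sum_r ((expm_partial (((0 +i* tau)%C : C) *: M) N *m w r) x ord0))).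
  by apply/funext => N; rewrite mulmxDr mxE mulmx_sumr summxE.
rewrite E mxE summxE mulrDr mulr_sumr.
have H2 := @cvg_sum_seq _ (index_enum I) _ _ (fun r => @exp_single _ _ _ _ _ _ (H r) x).
exact: (cvgD (@exp_single _ _ _ _ _ _ H0 x) H2).
Qed.
Lemma trig_odd (x : R) (q : int) :
  cos (x - pi * (2 * q%:~R + 1)) = - cos x /\ sin (x - pi * (2 * q%:~R + 1)) = - sin x.
Proof.
suff H : cos ((pi : R) * (2 * q%:~R + 1)) = -1 /\ sin ((pi : R) * (2 * q%:~R + 1)) = 0.
  by case: H => Hc Hs; rewrite cosB sinB Hc Hs; split; ring.
have Hn : forall n : nat, cos ((pi : R) * (2 * n%:R + 1)) = -1 /\ sin ((pi : R) * (2 * n%:R + 1)) = 0.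
  move=> n; have -> : (pi : R) * (2 * n%:R + 1) = pi + (pi *+ 2) *+ n.
    by rewrite -[(pi *+ 2) *+ n]mulr_natr -[pi *+ 2]mulr_natr; ring.
  by rewrite (periodicn (@cosD2pi R)) (periodicn (@sinD2pi R)) cospi sinpi.
case: q => n.
  by rewrite -pmulrn; exact: Hn.
have -> : (pi : R) * (2 * (Negz n)%:~R + 1) = - (pi * (2 * n%:R + 1)).
  by rewrite NegzE mulrNz -pmulrn -addn1 natrD; ring.
by rewrite cosN sinN; have [-> ->] := Hn n; rewrite oppr0.
Qed.
End S.
Section Graph.
Variable C : numClosedFieldType.
Variable T : finType.
Definition colf (f : T -> C) : 'cV[C]_#|T| := \col_i f (enum_val i).
Lemma sum_enum (G : T -> C) : \sum_(k < #|T|) G (enum_val k) = \sum_q G q.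
Proof. by rewrite [RHS](reindex _ (onW_bij _ (@enum_val_bij T))). Qed.
Lemma sum_enum_rank (G : 'I_#|T| -> C) : \sum_(k < #|T|) G k = \sum_q G (enum_rank q).
Proof. by rewrite [LHS](reindex _ (onW_bij _ (@enum_rank_bij T))). Qed.
Lemma basis_colf a : basis_vec C a = colf (fun p => (p == a)%:R).
Proof. by apply/matrixP => i j; rewrite !mxE. Qed.
Lemma lap_colf (e : rel T) f : lapmx C e *m colf f =
  colf (fun p => (#|[set w | e p w]|)%:R * f p - \sum_q (e p q)%:R * f q).
Proof.
apply/matrixP => i j; rewrite /lapmx mulmxBl !mxE; congr (_ - _).
  rewrite (bigD1 i) //= big1 ?addr0; first by rewrite !mxE eqxx mul1r.
  by move=> k /negbTE ki; rewrite !mxE eq_sym ki /= !mul0r.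
rewrite -sum_enum; apply: eq_bigr => k _; by rewrite !mxE.
Qed.
Lemma colf_sum (I : finType) (f : I -> T -> C) :
  \sum_r colf (f r) = colf (fun p => \sum_r f r p).
Proof. by apply/matrixP => i j; rewrite summxE !mxE; apply: eq_bigr => r _; rewrite mxE. Qed.
Lemma colf_scale (c : C) f : c *: colf f = colf (fun p => c * f p).
Proof. by apply/matrixP => i j; rewrite !mxE. Qed.
Lemma colf_add f g : colf f + colf g = colf (fun p => f p + g p).
Proof. by apply/matrixP => i j; rewrite !mxE. Qed.
Lemma colfE f i : colf f i ord0 = f (enum_val i).
Proof. by rewrite mxE. Qed.
Lemma colf_eq f g : (forall p, f p = g p) -> colf f = colf g.
Proof. by move=> H; apply/matrixP => i j; rewrite !mxE H. Qed.
Variable e : rel T.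
Hypothesis esym : symmetric e.
Let A := adjmx C e.
Let P := spectralmx A.
Let D := spectral_diag A.
Lemma adj_normal : A \is normalmx.
Proof.
have HA : A ^t* = A.
  by apply/matrixP => i j; rewrite !mxE conjC_nat esym.
by apply/normalmxP; rewrite HA.
Qed.
Lemma PA : P *m A = diag_mx D *m P.
Proof.
have HA : A = invmx P *m diag_mx D *m P by apply/orthomx_spectralP/adj_normal.
by rewrite {1}HA !mulmxA mulmxV ?spectral_unit // mul1mx.
Qed.
Lemma FL1 a y : (y == a)%:R = \sum_l invmx P (enum_rank a) l * P l (enum_rank y) :> C.
Proof.
have H1 : (invmx P *m P) (enum_rank a) (enum_rank y) =
   (1%:M : 'M[C]_#|T|) (enum_rank a) (enum_rank y) by rewrite mulVmx // spectral_unit.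
move: H1; rewrite !mxE => ->.
by rewrite (inj_eq enum_rank_inj) eq_sym.
Qed.
Lemma FL2 l x : \sum_y (e x y)%:R * P l (enum_rank y) = D 0 l * P l (enum_rank x).
Proof.
have H1 : (P *m A) l (enum_rank x) = (diag_mx D *m P) l (enum_rank x) by rewrite PA.
move: H1; rewrite mul_diag_mx !mxE => <-.
rewrite sum_enum_rank; apply: eq_bigr => y _.
by rewrite !mxE !enum_rankK esym mulrC.
Qed.
Lemma FL3 l : eigenvalue A (D 0 l).
Proof.
apply/eigenvalueP; exists (row l P).
  by rewrite -row_mul PA mul_diag_mx; apply/rowP => k; rewrite !mxE.
apply/eqP => H.
have H1 : (row l (P *m invmx P)) 0 l = (row l (1%:M : 'M[C]_#|T|)) 0 l
  by rewrite mulmxV // spectral_unit.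
by move: H1; rewrite row_mul H mul0mx !mxE eqxx => /eqP; rewrite eq_sym oner_eq0.
Qed.
End Graph.
Section ProdSum.
Variable C : comNzRingType.
Variables (I : finType) (T_ : I -> finType).
Lemma prod_sum_dffun (F : forall i, T_ i -> C) :
  \prod_i \sum_(y : T_ i) F i y = \sum_(g : {dffun forall i, T_ i}) \prod_i F i (g i).
Proof.
rewrite [RHS](reindex _ (onW_bij _ (@dffun_of_fprod_bij I T_))) /=.
under [RHS]eq_bigr do under eq_bigr do rewrite ffunE -[F _ _](ffunE (fun y => F _ y)).
rewrite (@big_fprod C 0 1 *%R +%R I T_ (fun i => [ffun y => F i y])).
transitivity (\prod_i \sum_(j | tagged_with T_ i j) untag 0 [ffun y => F i y] j); last first.
  exact: (bigA_distr_big_dep (fun i => tagged_with T_ i) (fun i j => untag 0 [ffun y => F i y] j)).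
apply: eq_bigr => i _.
transitivity (\sum_(y : T_ i) [ffun y => F i y] y).
  by apply: eq_bigr => y _; rewrite ffunE.
exact: (big_tag (fun i => [ffun y => F i y]) i).
Qed.
End ProdSum.
Lemma Posz_exp2 m : (2%:Z)^+m = (2 ^ m)%N%:Z.
Proof. by elim: m => // m IH; rewrite exprS expnS PoszM IH. Qed.
Lemma int_oddpart (z : int) m : nu2 z = Some m ->
  exists q : int, z = (2%:Z)^+m * (2 * q + 1).
Proof.
rewrite /nu2; case: eqP => // /eqP z0 [<-].
have n0 : (0 < `|z|)%N by rewrite absz_gt0.
have [ob co Ho] := pfactor_coprime (isT : prime 2) n0.
move: co; rewrite coprime_sym coprimen2 => oo.
have HEo : ob = (ob./2).*2.+1 by rewrite -[in LHS](odd_double_half ob) oo add1n.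
rewrite Posz_exp2.
move: (2 ^ logn 2 `|z|)%N Ho => P Ho.
case: z z0 n0 Ho => n z0 n0 Ho /=.
- exists (ob./2)%:Z; move: Ho; rewrite /= => ->. rewrite {1}HEo. lia.
- exists (- (ob./2)%:Z - 1); move: Ho; rewrite /= => Ho.
  rewrite NegzE Ho {1}HEo. lia.
Qed.
Section Misc.
Variable C : comNzRingType.
Lemma bool_prod (I : finType) (P : I -> bool) :
  ([forall i, P i])%:R = \prod_i (P i)%:R :> C.
Proof.
case: (boolP [forall i, P i]) => [/forallP H | ].
  by rewrite big1 // => i _; rewrite H.
rewrite negb_forall => /existsP [i Hi].
by rewrite (bigD1 i) //= (negbTE Hi) mul0r.
Qed.
Lemma card_setsum (T : finType) (P : pred T) :
  (#|[set q | P q]|)%:R = \sum_q (P q)%:R :> C.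
Proof.
rewrite -sum1_card natr_sum big_mkcond /=; apply: eq_bigr => q _.
by rewrite /in_mem /= /in_set asboolb; case: (P q).
Qed.
Lemma oddpart_prod (I : finType) (lam : I -> C) (m : I -> nat) :
  (forall i, exists q : int, lam i = ((2%:Z)^+(m i) * (2 * q + 1))%:~R) ->
  exists q : int, \prod_i lam i = ((2%:Z)^+(\sum_i m i) * (2 * q + 1))%:~R.
Proof.
move=> H.
apply: (big_ind2 (fun c n => exists q : int, c = ((2%:Z)^+n * (2 * q + 1))%:~R)).
- by exists 0; rewrite mulr0 add0r mulr1 expr0.
- move=> c1 n1 c2 n2 [q1 ->] [q2 ->].
  exists (2 * q1 * q2 + q1 + q2); rewrite -intrM; congr (_%:~R).
  rewrite exprD; ring.
- by move=> i _; exact: H.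
Qed.
End Misc.
Theorem theorem6 (R : realType) (d : nat) (V : 'I_d -> finType)
  (E : forall j : 'I_d, rel (V j)) (k : 'I_d -> nat)
  (hd : (0 < d)%N)
  (hsimple : forall j, simple_graph (E j))
  (hreg : forall j, regular (E j) (k j))
  (hk : forall j, (1 <= k j)%N)
  (heig : forall j, exists v : option nat,
     forall a : R[i], eigenvalue (adjmx R[i] (E j)) a ->
       exists z : int, a = z%:~R /\ nu2 z = v) :
  forall u : {dffun forall j : 'I_d, V j},
    lap_PST R (blowup2 (dprod_rel E)) (ord0, u) (ord_max, u).
Proof.
move=> u.
pose f := fun j (l : 'I_#|V j|) (y : V j) =>
  invmx (spectralmx (adjmx R[i] (E j))) (enum_rank (u j)) l *
  spectralmx (adjmx R[i] (E j)) l (enum_rank y).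
pose lam := fun j (l : 'I_#|V j|) => spectral_diag (adjmx R[i] (E j)) 0 l.
have Esym j : symmetric (E j) := (hsimple j).1.
have f1 j y : (y == u j)%:R = \sum_l f j l y := @FL1 _ _ (E j) (u j) y.
have f2 j l y : \sum_z (E j y z)%:R * f j l z = lam j l * f j l y.
  rewrite /f; under eq_bigr do rewrite mulrCA.
  by rewrite -mulr_sumr (@FL2 _ _ _ (Esym j)) mulrCA.
have f3 j l : eigenvalue (adjmx R[i] (E j)) (lam j l) := @FL3 _ _ _ (Esym j) l.
have f4 j : exists m, forall l, exists q : int, lam j l = ((2%:Z)^+m * (2 * q + 1))%:~R.
  have [v Hv] := heig j; case: v Hv => [m|] Hv.
    exists m => l; have [z [-> Hz]] := Hv _ (f3 j l).
    by have [q ->] := @int_oddpart _ _ Hz; exists q.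
  exfalso.
  have lam0 l : lam j l = 0.
    by have [z [-> Hz]] := Hv _ (f3 j l); move: Hz; rewrite /nu2; case: eqP => [-> _|//]; rewrite mulr0z.
  have : (0 < #|[set w | E j (u j) w]|)%N by rewrite hreg; exact: hk.
  move=> /card_gt0P [w]; rewrite in_setE => Hw.
  have : (E j w (u j))%:R = (1 : R[i]) by rewrite Esym Hw.
  have -> : (E j w (u j))%:R = \sum_z (E j w z)%:R * (z == u j)%:R :> R[i].
    by rewrite (bigD1 (u j)) //= eqxx mulr1 big1 ?addr0 // => z /negbTE ->; rewrite mulr0.
  under eq_bigr do rewrite f1 mulr_sumr.
  rewrite exchange_big /= big1 => [/esym/eqP|l _]; first by rewrite oner_eq0.
  by rewrite f2 lam0 mul0r.
clearbody f lam.
pose mP := fun j => cid (f4 j).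
pose m := fun j => sval (mP j).
pose M := (\sum_j m j)%N.
pose Fg := fun (g : {dffun forall j, 'I_#|V j|}) (x : {dffun forall j : 'I_d, V j}) =>
  \prod_j f j (g j) (x j).
pose Lg := fun (g : {dffun forall j, 'I_#|V j|}) => \prod_j lam j (g j).
have p1 x : \sum_g Fg g x = (x == u)%:R.
  rewrite /Fg -(@prod_sum_dffun _ _ _ (fun j l => f j l (x j))).
  have -> : (x == u) = [forall j, x j == u j].
    apply/eqP/forallP => [-> //|H]; apply/ffunP => j; exact/eqP/H.
  by rewrite bool_prod; apply: eq_bigr => j _; rewrite f1.
have p2 g x : \sum_y (dprod_rel E x y)%:R * Fg g y = Lg g * Fg g x.
  rewrite /dprod_rel /Fg /Lg.
  transitivity (\sum_(y : {dffun forall j : 'I_d, V j}) \prod_j ((E j (x j) (y j))%:R * f j (g j) (y j))).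
    by apply: eq_bigr => y _; rewrite big_split /= (@bool_prod _ _ (fun j => E j (x j) (y j))).
  rewrite -(@prod_sum_dffun _ _ _ (fun j z => (E j (x j) z)%:R * f j (g j) z)).
  by rewrite -big_split; apply: eq_bigr => j _; exact: f2.
have p3 g : exists q : int, Lg g = ((2%:Z)^+M * (2 * q + 1))%:~R.
  exact: (@oddpart_prod _ _ (fun j => lam j (g j)) m (fun j => svalP (mP j) (g j))).
pose Dr : R := 2 * \prod_j (k j)%:R.
have p4 (p : 'I_2 * {dffun forall j : 'I_d, V j}) :
    (#|[set w | blowup2 (dprod_rel E) p w]|)%:R = (Dr%:C : R[i]).
  rewrite card_setsum /blowup2.
  rewrite -(pair_bigA _ (fun (l : 'I_2) y => (dprod_rel E p.2 y)%:R)) /=.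
  rewrite sumr_const card_ord /Dr rmorphM rmorph_prod rmorph_nat mulr_natl; congr (_ *+ 2).
  rewrite /dprod_rel; under eq_bigr do rewrite bool_prod.
  rewrite -(@prod_sum_dffun _ _ _ (fun j z => (E j (p.2 j) z)%:R)); apply: eq_bigr => j _.
  by rewrite rmorph_nat -(hreg j (p.2 j)) card_setsum.
pose T0 := {dffun forall j : 'I_d, V j}.
pose sg := fun l : 'I_2 => if l == ord0 then 1 else -1 : R[i].
have I2 (l : 'I_2) : l = ord0 \/ l = ord_max.
  by case: l => [[|[|l]] Hl]; [left|right|by []]; exact: val_inj.
pose w0f := fun p : 'I_2 * T0 => 2^-1 * (sg p.1 * (p.2 == u)%:R).
pose wf := fun g (p : 'I_2 * T0) => 2^-1 * Fg g p.2.
have Ea : basis_vec R[i] (ord0, u) = colf _ _ w0f + \sum_g colf _ _ (wf g).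
  rewrite basis_colf colf_sum colf_add; apply: colf_eq => -[l y] /=.
  rewrite /wf /w0f -mulr_sumr p1 /sg xpair_eqE /=.
  have h2 : (2 : R[i]) != 0 by rewrite pnatr_eq0.
  by case: (I2 l) => ->; case: (y == u) => /=; field.
have Eb : basis_vec R[i] (ord_max, u) = - colf _ _ w0f + \sum_g colf _ _ (wf g).
  rewrite basis_colf colf_sum -scaleN1r colf_scale colf_add; apply: colf_eq => -[l y] /=.
  rewrite /wf /w0f -mulr_sumr p1 /sg xpair_eqE /=.
  have h2 : (2 : R[i]) != 0 by rewrite pnatr_eq0.
  by case: (I2 l) => ->; case: (y == u) => /=; field.
pose tau : R := pi / 2 ^+ M.+1.
exists tau; split; first by rewrite divr_gt0 ?pi_gt0 ?exprn_gt0.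
pose ex := fun t : R => ((cos t)%:C + 'i * (sin t)%:C : R[i]).
exists (- ex (tau * Dr)) => x.
rewrite Ea Eb.
have h2 : (2 : R[i]) != 0 by rewrite pnatr_eq0.
apply: (@exp_family R _ _ _ _ _ (fun g => colf _ _ (wf g)) (fun g => colf _ _ (wf g))).
- exists Dr; split.
    rewrite lap_colf colf_scale; apply: colf_eq => p; rewrite p4.
    have S0 : \sum_q (blowup2 (dprod_rel E) p q)%:R * w0f q = 0.
      rewrite /blowup2 -(pair_bigA _ (fun (l : 'I_2) y => (dprod_rel E p.2 y)%:R * w0f (l, y))) /=.
      rewrite !big_ord_recl big_ord0 /w0f /sg /= addr0 -big_split /=.
      by apply: big1 => y _; ring.
    by rewrite S0 subr0.
  by rewrite scalerN scaleNr opprK.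
- move=> g; have [q Hq] := p3 g.
  exists (Dr - 2 * ((2%:Z)^+M * (2 * q + 1))%:~R); split.
    rewrite lap_colf colf_scale; apply: colf_eq => p; rewrite p4.
    have S1 : \sum_q (blowup2 (dprod_rel E) p q)%:R * wf g q = Lg g * Fg g p.2.
      rewrite /blowup2 -(pair_bigA _ (fun (l : 'I_2) y => (dprod_rel E p.2 y)%:R * wf g (l, y))) /=.
      rewrite !big_ord_recl big_ord0 /wf /= addr0.
      under eq_bigr do rewrite mulrCA.
      by rewrite -mulr_sumr p2; field.
    rewrite S1 Hq /wf /Dr !rmorphB !rmorphM !rmorph_nat rmorph_int.
    by field.
  congr (_ *: _).
  have -> : tau * (Dr - 2 * ((2%:Z)^+M * (2 * q + 1))%:~R) = tau * Dr - pi * (2 * q%:~R + 1).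
    rewrite intrM intrD intrM Posz_exp2 -pmulrn natrX /tau exprS.
    have hM : (2 : R) ^+ M != 0 by rewrite expf_neq0 // pnatr_eq0.
    by field.
  have [Hc Hs] := @trig_odd R (tau * Dr) q.
  by rewrite /ex Hc Hs !rmorphN opprD mulrN.
Qed.
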